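(* Let $\mathcal{M}=(E_t,\mathcal{T})$ be a simple oriented matroid, let $k$ be an integer with $1\le k\le|\mathcal{T}|/2$, and put $h=\lfloor(|\mathcal{T}|-k+1)/2\rfloor$ and $\mathcal{P}=\bigcup_{e\in E_t}\binom{\mathcal{T}^+_e}{h}$. Then \[ \mathring{\kappa}^{\ast}_k(\mathcal{M})=\binom{|\mathcal{T}|/2}{k}2^k+\sum_{\substack{G\in\boldsymbol{\mathcal{E}}(\mathcal{P}):\\ 0<|G|\le|\mathcal{T}|-k}}\mu_{\boldsymbol{\mathcal{E}}}(\hat0,G)\sum_{j=0}^{k}\binom{|G\cup-G|-|G|}{j}\binom{\tfrac12(|\mathcal{T}|-|G\cup-G|)}{k-j}2^{k-j}. \]
   Context: Let $t\ge 1$ and $E_t=\{1,\dots,t\}$. $\mathcal{M}=(E_t,\mathcal{T})$ is a simple oriented matroid with set of topes $\mathcal{T}\subseteq\{+,-\}^{E_t}$, closed under negation. For $e\in E_t$, $\mathcal{T}^+_e=\{T\in\mathcal{T}: T(e)=+\}$. For $G\subseteq\mathcal{T}$, $-G=\{-T:T\in G\}$. $\binom{X}{j}$ denotes the family of $j$-element subsets of $X$. For a family $\mathcal{G}$ of subsets of $\mathcal{T}$, $\boldsymbol{\mathcal{E}}(\mathcal{G})$ is the lattice consisting of all unions $\bigcup_{F\in\mathcal{F}}F$ over nonempty subfamilies $\mathcal{F}\subseteq\mathcal{G}$, ordered by inclusion, together with a new least element $\hat0$ interpreted as the empty set (with $|\hat0|=0$); $\mu_{\boldsymbol{\mathcal{E}}}$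 is its Möbius function. A tope committee for $\mathcal{M}$ is a subset $\mathcal{K}^{\ast}\subset\mathcal{T}$ with $|\{T\in\mathcal{K}^{\ast}: T(e)=+\}|>\tfrac12|\mathcal{K}^{\ast}|$ for every $e\in E_t$; $\mathring{\kappa}^{\ast}_k(\mathcal{M})$ is the number of tope committees of cardinality $k$ containing no pair of opposite topes. Binomial coefficients $\binom{n}{j}$ are $0$ when $j>n$ or $j<0$. *)

(* Defs.v *)
From HB Require Import structures.
From mathcomp Require Import all_boot all_order all_algebra.
Set Implicit Arguments. Unset Strict Implicit. Unset Printing Implicit Defensive.
Import GRing.Theory Num.Theory.

(* Sign vectors on E_t = 'I_t : None = 0, Some true = +, Some false = -. *)
Definition signvec (t : nat) := {ffun 'I_t -> option bool}.
(* Topes: sign vectors with full support, true = +, false = -. *)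
Definition tope (t : nat) := {ffun 'I_t -> bool}.

Definition sv_zero t : signvec t := [ffun _ => None].
Definition sv_neg t (X : signvec t) : signvec t := [ffun e => omap negb (X e)].
Definition sv_comp t (X Y : signvec t) : signvec t :=
  [ffun e => if X e is Some b then Some b else Y e].
Definition sv_sep t (X Y : signvec t) (e : 'I_t) : bool :=
  match X e, Y e with Some a, Some b => a != b | _, _ => false end.

(* Covector axioms of an oriented matroid (Bjorner et al., Def. 4.1.1). *)
Definition om_covectors t (L : {set signvec t}) : Prop :=
  [/\ sv_zero t \in L,
      (forall X, X \in L -> sv_neg X \in L),
      (forall X Y, X \in L -> Y \in L -> sv_comp X Y \in L) &
      (forall X Y e, X \in L -> Y \in L -> sv_sep X Y e ->
         exists2 Z, Z \in L & (Z e = None /\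
           forall f, ~~ sv_sep X Y f -> Z f = sv_comp X Y f))].

(* Simple: no loops, no parallel or antiparallel pairs of elements. *)
Definition om_simple t (L : {set signvec t}) : Prop :=
  (forall e, exists2 X, X \in L & X e != None) /\
  (forall e f, e != f ->
     (exists2 X, X \in L & X f != X e) /\
     (exists2 X, X \in L & X f != omap negb (X e))).

Definition topes t (L : {set signvec t}) : {set tope t} :=
  [set T : tope t | [ffun e => Some (T e)] \in L].

Definition tneg t (T : tope t) : tope t := [ffun e => ~~ T e].
Definition negset t (G : {set tope t}) : {set tope t} := [set tneg T | T in G].

Definition Tplus t (TT : {set tope t}) (e : 'I_t) : {set tope t} :=
  [set T in TT | T e].

Definition is_committee t (K : {set tope t}) : bool :=
  [forall e : 'I_t, #|K| < 2 * #|[set T in K | T e]|].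

Definition no_opposite t (K : {set tope t}) : bool :=
  [forall T in K, tneg T \notin K].

Definition kappa_ring t (TT : {set tope t}) (k : nat) : nat :=
  #|[set K : {set tope t} | [&& K \subset TT, #|K| == k, is_committee K
                                & no_opposite K]]|.

(* The underlying set family of E(G): the empty set (standing for \hat0,
   which is not otherwise a union since members of P are nonempty here) and
   all unions of nonempty subfamilies of G, ordered by inclusion. *)
Definition union_lattice (X : finType) (P : {set {set X}}) : {set {set X}} :=
  set0 |: [set (\bigcup_(F in FF) F) | FF : {set {set X}} in powerset P & FF != set0].

(* Recursion with fuel n; used with n = #|G| (sufficient fuel). *)
Fixpoint mob_aux (X : finType) (Lat : {set {set X}}) (n : nat) (G : {set X})
  : int :=
  if G == set0 then (1%R : int) else
  match n with
  | 0 => 0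
  | n'.+1 => (- \sum_(H in Lat | H \proper G) mob_aux Lat n' H)%R
  end.

Definition mobius0 (X : finType) (Lat : {set {set X}}) (G : {set X}) : int :=
  mob_aux Lat #|G| G.

(* Main.v *)
Require Import Defs.
From HB Require Import structures.
From mathcomp Require Import all_boot all_order all_algebra.
Import GRing.Theory Num.Theory.
Set Implicit Arguments. Unset Strict Implicit. Unset Printing Implicit Defensive.

Lemma tnegK t : involutive (@tneg t).
Proof. by move=> T; apply/ffunP=> e; rewrite !ffunE negbK. Qed.

Lemma tneg_neq t (T : tope t) : 0 < t -> tneg T != T.
Proof.
move=> t0; apply/eqP=> /ffunP /(_ (Ordinal t0)); rewrite ffunE.
by case: (T _).
Qed.

Lemma mem_negset t (G : {set tope t}) x : (x \in negset G) = (tneg x \in G).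
Proof.
apply/imsetP/idP => [[y yG ->]|xG]; first by rewrite tnegK.
by exists (tneg x) => //; rewrite tnegK.
Qed.

Definition Ncnt t (W : {set tope t}) (i : nat) :=
  #|[set K : {set tope t} | [&& K \subset W, #|K| == i & no_opposite K]]|.

Lemma no_oppP t (K : {set tope t}) :
  reflect (forall T, T \in K -> tneg T \notin K) (no_opposite K).
Proof. exact: forall_inP. Qed.

Lemma Ncnt0 t (W : {set tope t}) : Ncnt W 0 = 1.
Proof.
rewrite /Ncnt -(cards1 (@set0 (tope t))); apply: eq_card => K.
rewrite !inE cards_eq0; case: eqP => [->|]; last by rewrite andbF.
by rewrite sub0set /=; apply/no_oppP=> T; rewrite inE.
Qed.

Lemma Nadd t (x : tope t) (V : {set tope t}) i : 0 < t -> x \notin V -> tneg x \notin V ->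
  #|[set K : {set tope t} | [&& K \subset x |: V, #|K| == i.+1,
       no_opposite K & x \in K]]| = Ncnt V i.
Proof.
move=> t0 xV nxV.
set S := [set K : {set tope t} | [&& K \subset V, #|K| == i & no_opposite K]].
have inj : {in S &, injective (fun K => x |: K)}.
  move=> K1 K2; rewrite !inE => /and3P[s1 _ _] /and3P[s2 _ _] E.
  have x1 : x \notin K1 by apply: contra xV; apply: (subsetP s1).
  have x2 : x \notin K2 by apply: contra xV; apply: (subsetP s2).
  by rewrite -(setU1K x1) E setU1K.
rewrite /Ncnt -/S -(card_in_imset inj); apply: eq_card => K.
rewrite inE; apply/and4P/imsetP => [[sK /eqP cK nK xK]|[K' K'S ->]].
  exists (K :\ x); last by rewrite setD1K.
  rewrite inE; apply/and3P; split.
  - apply/subsetP=> y; rewrite !inE => /andP[yx yK].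
    by move: (subsetP sK y yK); rewrite !inE (negbTE yx).
  - by move: cK; rewrite (cardsD1 x K) xK add1n => -[->].
  - apply/no_oppP=> T; rewrite !inE => /andP[_ TK].
    by apply/nandP; right; apply: (no_oppP _ nK).
move: K'S; rewrite inE => /and3P[sK' /eqP cK' nK'].
have xK' : x \notin K' by apply: contra xV; apply: (subsetP sK').
split.
- by apply: setUS.
- by rewrite cardsU1 xK' cK'.
- apply/no_oppP=> T; rewrite !inE => /orP[/eqP->|TK].
    rewrite (negbTE (tneg_neq _ t0)) /=.
    by apply: contra nxV; apply: (subsetP sK').
  apply/norP; split; last exact: (no_oppP _ nK').
  apply/eqP=> E; move: (subsetP sK' T TK); rewrite -(tnegK T) E.
  by rewrite (negbTE nxV).
- by rewrite setU11.
Qed.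

Lemma Nsplit t (W : {set tope t}) x i : Ncnt W i =
  #|[set K : {set tope t} | [&& K \subset W, #|K| == i, no_opposite K & x \in K]]| +
  #|[set K : {set tope t} | [&& K \subset W, #|K| == i, no_opposite K & x \notin K]]|.
Proof.
rewrite /Ncnt -(cardsID [set K : {set tope t} | x \in K]); congr (_ + _);
  apply: eq_card => K; rewrite !inE; case: (K \subset _); case: (#|K| == i); case: no_opposite; case: (x \in K). all: by [].
Qed.

Lemma subU1n t (x : tope t) (V K : {set tope t}) : x \notin V ->
  (K \subset x |: V) && (x \notin K) = (K \subset V).
Proof.
move=> xV; apply/andP/idP => [[sK xK]|sK].
  apply/subsetP=> y yK; move: (subsetP sK y yK); rewrite !inE.
  by case: eqP => // E; rewrite -E yK in xK.
split; first by apply: (subset_trans sK); apply: subsetU1.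
by apply: contra xV; apply: (subsetP sK).
Qed.

Lemma Ncase1 t (x : tope t) (V : {set tope t}) i : 0 < t -> x \notin V -> tneg x \notin V ->
  Ncnt (x |: V) i.+1 = Ncnt V i + Ncnt V i.+1.
Proof.
move=> t0 xV nxV; rewrite (Nsplit _ x) Nadd //; congr (_ + _).
by apply: eq_card => K; rewrite !inE -(subU1n K xV); case: (K \subset _); case: (x \in K); rewrite ?andbF ?andbT.
Qed.

Lemma Ncase2 t (x : tope t) (V : {set tope t}) i : 0 < t -> x \notin V -> tneg x \notin V ->
  Ncnt (x |: (tneg x |: V)) i.+1 = Ncnt V i + (Ncnt V i + Ncnt V i.+1).
Proof.
move=> t0 xV nxV; rewrite (Nsplit _ x); congr (_ + _).
  rewrite -(Nadd i t0 xV nxV); apply: eq_card => K; rewrite !inE.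
  apply/and4P/and4P => [[sK cK nK xK]|[sK cK nK xK]]; split=> //.
    apply/subsetP=> y yK; move: (subsetP sK y yK); rewrite !inE.
    case: eqP => [->|_] //=; case: eqP => [E|_] //=.
    by move: (no_oppP _ nK x xK); rewrite -E yK.
  by apply: (subset_trans sK); apply: setUS; apply: subsetU1.
have xnV : x \notin tneg x |: V by rewrite !inE eq_sym (negbTE (tneg_neq _ t0)).
rewrite -(Ncase1 i t0 (x:=tneg x)) ?tnegK //.
apply: eq_card => K; rewrite !inE -(subU1n K xnV).
by case: (K \subset _); case: (x \in K); rewrite ?andbF ?andbT.
Qed.

Definition Ff a b k := \sum_(j < k.+1) 'C(a, j) * 'C(b, k - j) * 2 ^ (k - j).

Lemma Ff_rec a b i : Ff a.+1 b i.+1 = Ff a b i + Ff a b i.+1.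
Proof.
rewrite /Ff big_ord_recl [X in _ = _ + X]big_ord_recl /= !bin0.
rewrite addnCA; congr (_ + _).
rewrite -big_split /=; apply: eq_bigr => j _.
by rewrite /bump /= !add1n subSS binS mulnDl mulnDl addnC.
Qed.

Lemma Ff0 b i : Ff 0 b i = 'C(b, i) * 2 ^ i.
Proof.
rewrite /Ff big_ord_recl /= big1 ?addn0 ?subn0 ?mul1n //.
Qed.

Lemma Ffi0 a b : Ff a b 0 = 1.
Proof. by rewrite /Ff big_ord1 /= !bin0. Qed.

Definition closedN t (R : {set tope t}) := forall x, x \in R -> tneg x \in R.

Lemma NcntR t (R : {set tope t}) i : 0 < t -> closedN R ->
  Ncnt R i = 'C(#|R|./2, i) * 2 ^ i.
Proof.
move=> t0; have: #|R| <= #|R| by [].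
move: {2}#|R| => n; elim: n R i => [|n IH] R i lem clR.
  move: lem; rewrite leqn0 cards_eq0 => /eqP ->.
  case: i => [|i]; first by rewrite Ncnt0 bin0.
  rewrite cards0 /= bin0n mul0n; apply/eqP; rewrite cards_eq0; apply/eqP/setP=> K.
  rewrite !inE subset0; case: eqP => // ->; by rewrite cards0.
have [R0|/card_gt0P[x xR]] := posnP #|R|.
  move: R0 => /eqP; rewrite cards_eq0 => /eqP ->; case: i => [|i]; first by rewrite Ncnt0 bin0.
  rewrite /= cards0 bin0n mul0n; apply/eqP; rewrite cards_eq0; apply/eqP/setP=> K.
  rewrite !inE subset0; case: eqP => // ->; by rewrite cards0.
set V := R :\ x :\ tneg x.
have nxV : tneg x \notin V by rewrite !inE eqxx.
have xV : x \notin V by rewrite !inE eqxx andbF.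
have RE : R = x |: (tneg x |: V).
  apply/setP=> y; rewrite !inE; case: eqP => [->|]; first by rewrite xR.
  case: eqP => [->|]; first by rewrite (clR x xR).
  by [].
have cV : #|R| = (#|V|.+2).
  rewrite RE cardsU1 cardsU1 !inE eqxx andbF /= eq_sym (negbTE (tneg_neq _ t0)) /=.
  by rewrite eqxx.
have clV : closedN V.
  move=> y; rewrite !inE => /and3P[yn yx yR]; rewrite (clR y yR) andbT.
  rewrite (inj_eq (can_inj (@tnegK t))) yx /=.
  by apply: contraNneq yn => E; rewrite -E tnegK.
have IH' : forall j, Ncnt V j = 'C(#|V|./2, j) * 2 ^ j.
  move=> j; apply: IH => //.
  by move: lem; rewrite cV => /ltnW; rewrite ltnS.
case: i => [|i]; first by rewrite Ncnt0 bin0.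
rewrite RE Ncase2 // !IH' -RE cV /=.
rewrite binS mulnDl addnA addnn [RHS]addnC; congr (_ + _).
by rewrite expnS mulnCA mul2n.
Qed.

Lemma NcntAR t (A R : {set tope t}) i : 0 < t -> closedN R ->
  (forall x, x \in A -> x \notin R) ->
  (forall x, x \in A -> tneg x \notin A :|: R) ->
  Ncnt (A :|: R) i = Ff #|A| (#|R|./2) i.
Proof.
move=> t0 clR; have: #|A| <= #|A| by [].
move: {2}#|A| => n; elim: n A i => [|n IH] A i lem dAR nA.
  move: lem; rewrite leqn0 cards_eq0 => /eqP ->.
  by rewrite set0U cards0 Ff0 NcntR.
have [A0|/card_gt0P[x xA]] := posnP #|A|.
  move: A0 => /eqP; rewrite cards_eq0 => /eqP ->.
  by rewrite set0U cards0 Ff0 NcntR.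
set V := A :\ x.
have AE : A :|: R = x |: (V :|: R).
  by rewrite setUA setD1K.
have cA : #|A| = #|V|.+1 by rewrite (cardsD1 x A) xA.
have xVR : x \notin V :|: R by rewrite !inE eqxx /= dAR.
have nxVR : tneg x \notin V :|: R.
  apply: contra (nA x xA); rewrite !inE => /orP[/andP[_ ->]|->] //; by rewrite orbT.
have IH' : forall j, Ncnt (V :|: R) j = Ff #|V| (#|R|./2) j.
  move=> j; apply: IH.
  - by move: lem; rewrite cA ltnS.
  - by move=> y; rewrite inE => /andP[_ /dAR].
  - move=> y; rewrite inE => /andP[_ yA]; apply: contra (nA y yA).
    rewrite !inE => /orP[/andP[_ ->]|->] //; by rewrite orbT.
case: i => [|i]; first by rewrite Ncnt0 Ffi0.
by rewrite AE Ncase1 // !IH' cA Ff_rec.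
Qed.

Lemma NcntG t (TT G : {set tope t}) k : 0 < t -> closedN TT -> G \subset TT ->
  Ncnt (TT :\: G) k =
  Ff (#|G :|: negset G| - #|G|) ((#|TT| - #|G :|: negset G|) %/ 2) k.
Proof.
move=> t0 clT sG.
have sNG : negset G \subset TT.
  apply/subsetP=> x; rewrite mem_negset => /(subsetP sG) /clT; by rewrite tnegK.
set A := negset G :\: G; set R := TT :\: (G :|: negset G).
have E : TT :\: G = A :|: R.
  apply/setP=> x; rewrite !inE; case xG: (x \in G) => //=.
  case xN: (x \in negset G) => //=.
  by rewrite (subsetP sNG x xN).
have cA : #|A| = #|G :|: negset G| - #|G|.
  rewrite -cardsDS ?subsetUl //; apply: eq_card => x; rewrite !inE.
  by case: (x \in G).
have cR : #|R| = #|TT| - #|G :|: negset G|.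
  by rewrite cardsDS // subUset sG.
rewrite E NcntAR // ?cA ?cR ?divn2 //.
- move=> x; rewrite !inE => /andP[nxG xT]; rewrite (clT x xT) /=.
  by move: nxG; rewrite !mem_negset tnegK andbT orbC.
- by move=> x; rewrite !inE => /andP[_ ->]; rewrite orbT.
- by move=> x; rewrite !inE !mem_negset tnegK => /andP[_ ->].
Qed.
From Stdlib Require Import Lia.
Section Mob.
Variable X : finType.
Implicit Types (Lat P : {set {set X}}) (G H S : {set X}).

Lemma mob_fuel Lat n m G : #|G| <= n -> #|G| <= m ->
  mob_aux Lat n G = mob_aux Lat m G.
Proof.
elim: n m G => [|n IH] [|m] G /=; case: eqP => // /eqP G0;
  rewrite ?leqn0 ?cards_eq0 ?(negbTE G0) //.
move=> Gn Gm; congr (- _)%R; apply: eq_bigr => H /andP[_ HG].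
have := proper_card HG => lt; apply: IH.
  by rewrite -ltnS (leq_trans lt).
by rewrite -ltnS (leq_trans lt).
Qed.

Lemma mob0 Lat : mobius0 Lat set0 = 1%R.
Proof. by rewrite /mobius0 cards0 /= eqxx. Qed.

Lemma mob_rec Lat G : G != set0 ->
  mobius0 Lat G = (- \sum_(H in Lat | H \proper G) mobius0 Lat H)%R.
Proof.
move=> G0; rewrite /mobius0.
have : 0 < #|G| by rewrite card_gt0.
case E: #|G| => [|n] //= _; rewrite (negbTE G0); congr (- _)%R.
apply: eq_bigr => H /andP[_ HG]; apply: mob_fuel => //.
by rewrite -ltnS -E proper_card.
Qed.

Lemma ulP P G : G \in union_lattice P ->
  G = set0 \/ exists2 FF : {set {set X}}, FF \subset P & G = \bigcup_(F in FF) F.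
Proof.
rewrite /union_lattice !inE => /orP[/eqP->|]; first by left.
move=> /imsetP[FF]; rewrite inE => /andP[]; rewrite inE => sFF _ ->.
by right; exists FF.
Qed.

Lemma ul_mem P (FF : {set {set X}}) : FF \subset P -> FF != set0 ->
  \bigcup_(F in FF) F \in union_lattice P.
Proof.
move=> sFF FF0; rewrite /union_lattice !inE; apply/orP; right.
by apply/imsetP; exists FF => //; rewrite !inE sFF.
Qed.

Lemma set0_ul P : set0 \in union_lattice P.
Proof. by rewrite /union_lattice !inE eqxx. Qed.

Lemma mob_sum P S : (forall F, F \in P -> F != set0) ->
  (\sum_(G in union_lattice P | G \subset S) mobius0 (union_lattice P) G =
  if [exists F in P, F \subset S] then 0 else 1)%R.
Proof.
move=> P0; set EP := union_lattice P.
case: ifP => [/exists_inP[F0 F0P F0S]|/exists_inP nE].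
  set FF := [set F in P | F \subset S].
  set U := \bigcup_(F in FF) F.
  have FF0 : FF != set0 by apply/set0Pn; exists F0; rewrite inE F0P.
  have UE : U \in EP by apply: ul_mem => //; apply/subsetP=> F; rewrite inE => /andP[].
  have US : U \subset S by apply/bigcupsP=> F; rewrite inE => /andP[].
  have U0 : U != set0.
    apply: contraNneq (P0 _ F0P) => U0; rewrite -subset0 -U0.
    by apply: (bigcup_max F0) => //; rewrite inE F0P F0S.
  rewrite (eq_bigl (fun G => (G \in EP) && (G \subset U))); last first.
    move=> G; apply/andP/andP => [[GE GS]|[GE GU]]; split=> //.
      case: (ulP GE) => [->|[FF' sFF' GE']]; first by rewrite sub0set.
      rewrite GE'; apply/bigcupsP=> F FF'F; apply: (bigcup_max F) => //.
      rewrite inE (subsetP sFF' F FF'F) /=; apply: subset_trans GS.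
      by rewrite GE'; apply: (bigcup_max F).
    exact: subset_trans US.
  rewrite (bigD1 U) /=; last by rewrite UE subxx.
  rewrite (mob_rec _ U0) addrC (eq_bigl (fun H => (H \in EP) && (H \proper U))).
    by rewrite subrr.
  by move=> H; rewrite properEneq andbA andbC andbA; congr (_ && _); rewrite andbC.
rewrite (eq_bigl (pred1 set0)); first by rewrite big_pred1_eq mob0.
move=> G /=; apply/andP/eqP => [[GE GS]|->]; last by rewrite set0_ul sub0set.
case: (ulP GE) => [//|[FF sFF GU]].
have [FF0|[F FFF]] := set_0Vmem FF; first by rewrite GU FF0 big_set0.
exfalso; apply: nE; exists F; first exact: (subsetP sFF).
by apply: subset_trans GS; rewrite GU; apply: (bigcup_max F).
Qed.
End Mob.
Lemma arith c k m : c <= k -> 2 * k <= 2 * m ->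
  (k < 2 * c) = ~~((2 * m - k + 1) %/ 2 <= m - c).
Proof.
move=> ck km.
have E := divn_eq (2 * m-k+1) 2; have L := ltn_pmod (2 * m-k+1) (isT : 0 < 2).
move: E L; set q := _ %/ 2; set r := _ %% 2 => E L; clearbody q r.
rewrite -[LHS]negbK; congr negb; rewrite -leqNgt.
move/leP: ck; move/leP: km; move/leP: L => L km ck.
apply/idP/idP => /leP H; apply/leP; rewrite -?plusE -?multE -?minusE in E H km *; lia.
Qed.

Lemma closedTT t (L : {set signvec t}) : om_covectors L -> closedN (topes L).
Proof.
case=> _ hneg _ _ x; rewrite !inE => /hneg.
congr (_ \in L); apply/ffunP=> e; by rewrite !ffunE.
Qed.

Lemma cardTplus t (TT : {set tope t}) e : closedN TT -> #|TT| = 2 * #|Tplus TT e|.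
Proof.
move=> clT; rewrite -(cardsID (Tplus TT e) TT) mul2n -addnn; congr (_ + _).
  by apply: eq_card => x; rewrite !inE; case: (x \in TT); rewrite ?andbF.
rewrite -(card_imset _ (can_inj (@tnegK t))); apply: eq_card => x.
rewrite !inE; apply/imsetP/andP => [[y]|[xT xe]].
  rewrite !inE => /andP[nye yT] ->; rewrite clT // ffunE; split=> //.
  by move: nye; rewrite yT.
exists (tneg x); last by rewrite tnegK.
by rewrite !inE clT //= ffunE xe.
Qed.

Lemma comm_iff t (TT K : {set tope t}) k : closedN TT -> K \subset TT ->
  #|K| = k -> 2 * k <= #|TT| ->
  is_committee K = ~~ [exists S in [set S : {set tope t} |
              [exists e : 'I_t, (S \subset Tplus TT e) &&
                 (#|S| == (#|TT| - k + 1) %/ 2)]], S \subset TT :\: K].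
Proof.
move=> clT sK cK kT; set h := (#|TT| - k + 1) %/ 2.
have -> : [exists S in [set S : {set tope t} |
              [exists e : 'I_t, (S \subset Tplus TT e) && (#|S| == h)]],
             S \subset TT :\: K] =
          [exists e, h <= #|Tplus TT e :\: K|].
  apply/exists_inP/existsP => [[S]|[e he]].
    rewrite inE => /existsP[e /andP[SPe /eqP cS]] SK; exists e; rewrite -cS.
    apply: subset_leq_card; move: SK; rewrite !subsetD SPe => /andP[].
    by [].
  have [s [us ss subs]] := card_geqP he.
  have sS : [set x in s] \subset Tplus TT e :\: K.
    by apply/subsetP=> x; rewrite inE => /subs.
  exists [set x in s].
    rewrite inE; apply/existsP; exists e.
    rewrite cardsE (card_uniqP us) ss eqxx andbT.
    by apply: (subset_trans sS); apply: subsetDl.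
  apply: (subset_trans sS); apply: setSD; apply/subsetP=> x; rewrite inE.
  by case/andP.
rewrite /is_committee negb_exists; apply: eq_forallb => e.
have Te := cardTplus e clT.
rewrite cardsD.
have -> : Tplus TT e :&: K = [set T in K | T e].
  apply/setP=> x; rewrite !inE andbC; case xK: (x \in K) => //=.
  by rewrite (subsetP sK x xK).
rewrite cK /h Te; apply: arith; last by rewrite -Te.
by rewrite -cK; apply: subset_leq_card; apply/subsetP=> x; rewrite inE => /andP[].
Qed.

Theorem mainTheorem6 (t : nat) (L : {set signvec t}) (k : nat) :
  1 <= t -> om_covectors L -> om_simple L ->
  1 <= k -> 2 * k <= #|topes L| ->
  let TT := topes L in
  let h := (#|TT| - k + 1) %/ 2 in
  let P := [set S : {set tope t} |
              [exists e : 'I_t, (S \subset Tplus TT e) && (#|S| == h)]] in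
  let EP := union_lattice P in
  Posz (kappa_ring TT k) =
    (Posz ('C(#|TT| %/ 2, k) * 2 ^ k)%N +
     \sum_(G in EP | ((0 < #|G|) && (#|G| <= #|TT| - k))%N)
       mobius0 EP G *
       Posz (\sum_(j < k.+1)
          'C(#|G :|: negset G| - #|G|, j) *
          'C((#|TT| - #|G :|: negset G|) %/ 2, k - j) * 2 ^ (k - j))%N)%R.
Proof.
move=> t0 omL _ k1 kT TT h P EP; have {}kT : 2 * k <= #|TT| := kT.
have clT : closedN TT := closedTT omL.
have P0 : forall F, F \in P -> F != set0.
  move=> F; rewrite inE => /existsP[e /andP[_ /eqP cF]].
  rewrite -card_gt0 cF /h divn_gt0 //.
  move/leP: kT; move/leP: k1 => k1' kT'; apply/leP.
  rewrite -?plusE -?multE -?minusE in kT' *; lia.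
have EPsub : forall G, G \in EP -> G \subset TT.
  move=> G /ulP[->|[FF sFF ->]]; first by rewrite sub0set.
  apply/bigcupsP=> F /(subsetP sFF); rewrite inE => /existsP[e /andP[sF _]].
  by apply: (subset_trans sF); apply/subsetP=> x; rewrite inE => /andP[].
pose Q := fun K : {set tope t} => [&& K \subset TT, #|K| == k & no_opposite K].
have step1 : Posz (kappa_ring TT k) =
   (\sum_(K | Q K) \sum_(G in EP | G \subset TT :\: K) mobius0 EP G)%R.
  rewrite /kappa_ring -natz -sumr_const big_mkcond [RHS]big_mkcond /=.
  apply: eq_bigr => K _; rewrite !inE /Q.
  case sK: (K \subset TT) => //=; case cK: (#|K| == k) => //=.
  case: (no_opposite K); rewrite ?andbF ?andbT //.
  rewrite mob_sum // (comm_iff clT sK (eqP cK) kT) -/h -/P.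
  by case: [exists _ in _, _].
have step2 : (\sum_(K | Q K) \sum_(G in EP | G \subset TT :\: K) mobius0 EP G =
    \sum_(G in EP) mobius0 EP G * Posz (Ncnt (TT :\: G) k))%R.
  under eq_bigr do rewrite big_mkcondr.
  rewrite exchange_big /=; apply: eq_bigr => G GE.
  rewrite -big_mkcondr /=.
  rewrite (eq_bigl (fun K => K \in [set K : {set tope t} |
              [&& K \subset TT :\: G, #|K| == k & no_opposite K]])).
    by rewrite sumr_const -mulr_natr natz.
  move=> K; rewrite /Q !inE.
  have sG := EPsub G GE.
  rewrite [G \subset _]subsetD [K \subset TT :\: G]subsetD sG disjoint_sym /=.
  by case: (K \subset TT); case: (#|K| == k); case: (no_opposite K); case: [disjoint _ & _].
rewrite step1 step2 (bigD1 set0) ?set0_ul //= mob0 mul1r setD0 NcntR // divn2.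
congr (_ + _)%R.
rewrite [LHS](bigID (fun G : {set tope t} => (#|G| <= #|TT| - k)%N)) /= [X in (_ + X)%R]big1 ?addr0.
  apply: eq_big => G.
    by rewrite card_gt0 andbA.
  move=> /andP[/andP[GE _] _]; congr (_ * Posz _)%R.
  by rewrite NcntG // ?EPsub.
move=> G /andP[/andP[GE _]]; rewrite -ltnNge => lt.
apply/eqP; rewrite mulf_eq0; apply/orP; right.
apply/eqP; congr Posz; apply/eqP; rewrite cards_eq0; apply/eqP/setP=> K.
rewrite !inE; apply/negbTE; apply/and3P=> -[sK /eqP cK _].
have := subset_leq_card sK; rewrite cardsDS ?EPsub // cK.
rewrite leq_subRL ?subset_leq_card ?EPsub // => le.
move: lt; rewrite ltn_subLR; last by apply: leq_trans kT; rewrite leq_pmull.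
by rewrite addnC ltnNge le.
Qed.
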